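(* For $x\in(0,1)$ and $z\in(0,\infty)$, the functions $f_1(k)=\sin(x^k)^{1/k}$, $f_2(k)=\cos(x^k)^{1/k}$ and $f_4(k)=\tanh(z^k)^{1/k}$ are increasing on $(0,\infty)$. *)

(* Defs.v *)
From Stdlib Require Import Reals.
Open Scope R_scope.

Definition tanh (a : R) : R := (exp a - exp (- a)) / (exp a + exp (- a)).

Definition f1 (x k : R) : R := Rpower (sin (Rpower x k)) (/ k).
Definition f2 (x k : R) : R := Rpower (cos (Rpower x k)) (/ k).
Definition f4 (z k : R) : R := Rpower (tanh (Rpower z k)) (/ k).

Definition incr_pos (f : R -> R) : Prop :=
  forall k1 k2, 0 < k1 -> k1 < k2 -> f k1 < f k2.

(* Main.v *)
Require Import Defs.
From Stdlib Require Import Reals Lra Psatz.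
From Coquelicot Require Import Coquelicot.
Open Scope R_scope.

Lemma conc (f f' : R -> R) a b : 0 < b < a -> f 0 = 0 ->
  (forall c, 0 <= c <= a -> derivable_pt_lim f c (f' c)) ->
  (forall c1 c2, 0 <= c1 -> c1 < c2 -> c2 <= a -> f' c2 < f' c1) ->
  b * f a < a * f b /\ f a < f' 0 * a.
Proof.
  intros [Hb Hba] H0 Hd Hdec.
  destruct (MVT_cor2 f f' 0 b Hb) as [c1 [E1 [Hc1 Hc1']]].
  { intros c Hc; apply Hd; lra. }
  destruct (MVT_cor2 f f' b a Hba) as [c2 [E2 [Hc2 Hc2']]].
  { intros c Hc; apply Hd; lra. }
  destruct (MVT_cor2 f f' 0 a ltac:(lra)) as [c3 [E3 [Hc3 Hc3']]].
  { intros c Hc; apply Hd; lra. }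
  assert (D1 : f' c2 < f' c1) by (apply Hdec; lra).
  assert (D3 : f' c3 < f' 0) by (apply Hdec; lra).
  rewrite H0 in E1, E3.
  assert (P : 0 < b * (a - b) * (f' c1 - f' c2))
    by (apply Rmult_lt_0_compat; [apply Rmult_lt_0_compat|]; lra).
  split; nra.
Qed.

Lemma keyA k1 k2 a b Sa Sb : 0 < k1 < k2 -> 0 < a -> 0 < b ->
  ln b * k1 = ln a * k2 -> 0 < Sa -> 0 < Sb -> Sa < a -> b * Sa <= a * Sb ->
  k2 * ln Sa < k1 * ln Sb.
Proof.
  intros Hk Ha Hb E HSa HSb H1 H2.
  assert (L1 : ln Sa < ln a) by (apply ln_increasing; lra).
  assert (L2 : ln (b * Sa) <= ln (a * Sb)) by (apply ln_le; [nra | lra]).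
  rewrite !ln_mult in L2 by lra.
  nra.
Qed.

Lemma keyB k1 k2 Sa Sb : 0 < k1 < k2 -> 0 < Sa < 1 -> Sa <= Sb ->
  k2 * ln Sa < k1 * ln Sb.
Proof.
  intros Hk HSa H.
  assert (L1 : ln Sa < 0) by (rewrite <- ln_1; apply ln_increasing; lra).
  assert (L2 : ln Sa <= ln Sb) by (apply ln_le; lra).
  nra.
Qed.

Lemma final k1 k2 Sa Sb : 0 < k1 < k2 -> k2 * ln Sa < k1 * ln Sb ->
  Rpower Sa (/ k1) < Rpower Sb (/ k2).
Proof.
  intros Hk H. unfold Rpower. apply exp_increasing.
  assert (I1 : / k1 * k1 = 1) by (field; lra).
  assert (I2 : / k2 * k2 = 1) by (field; lra).
  assert (P1 : 0 < / k1) by (apply Rinv_0_lt_compat; lra).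
  assert (P2 : 0 < / k2) by (apply Rinv_0_lt_compat; lra).
  assert (P : 0 < / k1 * / k2) by nra.
  assert (Q : / k1 * / k2 * (k2 * ln Sa) < / k1 * / k2 * (k1 * ln Sb))
    by (apply Rmult_lt_compat_l; lra).
  replace (/ k1 * / k2 * (k2 * ln Sa)) with (/ k1 * ln Sa) in Q
    by (field; lra).
  replace (/ k1 * / k2 * (k1 * ln Sb)) with (/ k2 * ln Sb) in Q
    by (field; lra).
  lra.
Qed.

Definition td (t : R) : R := 4 / (exp t + exp (- t)) ^ 2.

Lemma tanh_der t : derivable_pt_lim Defs.tanh t (td t).
Proof.
  apply is_derive_Reals. unfold Defs.tanh, td.
  assert (0 < exp t) by apply exp_pos.
  assert (0 < exp (- t)) by apply exp_pos.
  auto_derive; unfold cosh, sinh.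
  - lra.
  - rewrite exp_Ropp in *. revert H. generalize (exp t). intros u Hu.
    field. split; nra.
Qed.

Lemma td_pos t : 0 < td t.
Proof.
  unfold td. assert (0 < exp t) by apply exp_pos.
  assert (0 < exp (- t)) by apply exp_pos.
  apply Rdiv_lt_0_compat; [lra|]. apply pow_lt; lra.
Qed.

Lemma td_dec c1 c2 : 0 <= c1 -> c1 < c2 -> td c2 < td c1.
Proof.
  intros H1 H2. unfold td. rewrite !exp_Ropp.
  assert (U : 1 <= exp c1) by (rewrite <- exp_0; destruct H1 as [H1|H1];
    [left; apply exp_increasing; lra | subst; lra]).
  assert (V : exp c1 < exp c2) by (apply exp_increasing; lra).
  set (u := exp c1) in *. set (v := exp c2) in *.
  assert (S : u + / u < v + / v).
  { assert (E : v + / v - (u + / u) = (v - u) * (1 - / (u * v)))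
      by (field; lra).
    assert (/ (u * v) < 1).
    { rewrite <- Rinv_1. apply Rinv_lt_contravar; nra. }
    assert (0 < (v - u) * (1 - / (u * v))) by (apply Rmult_lt_0_compat; lra).
    lra. }
  assert (0 < / u) by (apply Rinv_0_lt_compat; lra).
  assert (0 < / v) by (apply Rinv_0_lt_compat; lra).
  unfold Rdiv. apply Rmult_lt_compat_l; [lra|].
  apply Rinv_lt_contravar.
  - apply Rmult_lt_0_compat; apply pow_lt; lra.
  - simpl. nra.
Qed.

Lemma tanh_0 : Defs.tanh 0 = 0.
Proof. unfold Defs.tanh. rewrite Ropp_0, exp_0. field. Qed.

Lemma td_0 : td 0 = 1.
Proof. unfold td. rewrite Ropp_0, exp_0. field. Qed.

Lemma tanh_bounds t : 0 < t -> 0 < Defs.tanh t < 1.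
Proof.
  intros H. unfold Defs.tanh. rewrite exp_Ropp.
  assert (U : 1 < exp t) by (rewrite <- exp_0; apply exp_increasing; lra).
  set (u := exp t) in *.
  assert (/ u < 1) by (rewrite <- Rinv_1; apply Rinv_lt_contravar; lra).
  assert (0 < / u) by (apply Rinv_0_lt_compat; lra).
  split.
  - apply Rdiv_lt_0_compat; lra.
  - apply (proj1 (Rdiv_lt_1 (u - / u) (u + / u) ltac:(lra))); lra.
Qed.

Theorem lemma4p1 :
  (forall x : R, 0 < x < 1 -> incr_pos (f1 x) /\ incr_pos (f2 x)) /\
  (forall z : R, 0 < z -> incr_pos (f4 z)).
Proof.
  split.
  - intros x Hx.
    assert (Lx : ln x < 0) by (rewrite <- ln_1; apply ln_increasing; lra).
    assert (PI1 := PI2_1).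
    split; intros k1 k2 Hk1 Hk12; unfold f1, f2;
      assert (Ha : Rpower x k1 < 1) by (unfold Rpower; rewrite <- exp_0;
        apply exp_increasing; nra);
      assert (Hab : Rpower x k2 < Rpower x k1) by (unfold Rpower;
        apply exp_increasing; nra);
      assert (Ha0 : 0 < Rpower x k1) by apply exp_pos;
      assert (Hb0 : 0 < Rpower x k2) by apply exp_pos;
      apply final; try lra.
    + assert (E : ln (Rpower x k2) * k1 = ln (Rpower x k1) * k2)
        by (unfold Rpower; rewrite !ln_exp; ring).
      destruct (conc sin cos (Rpower x k1) (Rpower x k2)) as [C _].
      * lra.
      * apply sin_0.
      * intros; apply derivable_pt_lim_sin.
      * intros; apply cos_decreasing_1; lra.
      * apply (keyA k1 k2 (Rpower x k1) (Rpower x k2)); try lra.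
        -- apply sin_gt_0; lra.
        -- apply sin_gt_0; lra.
        -- apply sin_lt_x; lra.
    + apply keyB; [lra | split | ].
      * apply cos_gt_0; lra.
      * rewrite <- cos_0. apply cos_decreasing_1; lra.
      * left. apply cos_decreasing_1; lra.
  - intros z Hz k1 k2 Hk1 Hk12. unfold f4.
    assert (Ha0 : 0 < Rpower z k1) by apply exp_pos.
    assert (Hb0 : 0 < Rpower z k2) by apply exp_pos.
    assert (E : ln (Rpower z k2) * k1 = ln (Rpower z k1) * k2)
      by (unfold Rpower; rewrite !ln_exp; ring).
    apply final; [lra|].
    destruct (Rlt_or_le (ln z) 0) as [Lz|Lz].
    + assert (Hab : Rpower z k2 < Rpower z k1) by (unfold Rpower;
        apply exp_increasing; nra).
      destruct (conc Defs.tanh td (Rpower z k1) (Rpower z k2)) as [C D].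
      * lra.
      * apply tanh_0.
      * intros; apply tanh_der.
      * intros; apply td_dec; lra.
      * rewrite td_0 in D.
        apply (keyA k1 k2 (Rpower z k1) (Rpower z k2)); try lra.
        -- apply tanh_bounds; lra.
        -- apply tanh_bounds; lra.
    + assert (Hab : Rpower z k1 <= Rpower z k2).
      { unfold Rpower. destruct Lz as [Lz|Lz].
        - left; apply exp_increasing; nra.
        - rewrite <- Lz, !Rmult_0_r; lra. }
      apply keyB; [lra | apply tanh_bounds; lra |].
      destruct Hab as [Hab|Hab]; [|rewrite Hab; lra].
      destruct (MVT_cor2 Defs.tanh td _ _ Hab) as [c [Ec _]].
      { intros; apply tanh_der. }
      assert (td c > 0) by apply td_pos. nra.
Qed.
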